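(* Let $\bar r\in(0,1)$ be a local minimum point of $F$. Then $$\lim_{r\to\bar r^-}\partial_rG(r,\bar r)=-\lim_{r\to\bar r^+}\partial_rG(r,\bar r)=\frac12.$$
   Context: Let $n\ge2$, $|\partial B_1|$ the $(n-1)$-dimensional measure of the unit sphere in $\mathbb{R}^n$, and $V\ge0$, $V\not\equiv0$, a smooth function on $[0,1]$ (the profile of a smooth radial potential on the unit ball). For $s\in(0,1)$, $G(\cdot,s)$ is the Green function of $\mathcal{L}u=-u''-\frac{n-1}{r}u'+V(r)u$ on $(0,1)$ with $u'(0)=0$ and $u'(1)=0$: that is, $-\partial_r^2G(r,s)-\frac{n-1}{r}\partial_rG(r,s)+V(r)G(r,s)=\delta_s$ in distributions on $(0,1)$ (Dirac mass w.r.t. $dr$), $\partial_rG(0,s)=\partial_rG(1,s)=0$. $F(r)=|\partial B_1|\,r^{n-1}/G(r,r)$ for $r\in(0,1)$. *)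

(* Defs.v *)
From Stdlib Require Import Reals.
From Coquelicot Require Import Coquelicot.
Open Scope R_scope.

(* |∂B_1| in R^n = 2 π^{n/2} / Γ(n/2), via the recursion
   A(1) = 2, A(2) = 2π, A(m+2) = (2π/m) A(m). (A(0) is unused.) *)
Fixpoint sphere_area (n : nat) : R :=
  match n with
  | O => 0
  | S O => 2
  | S (S O) => 2 * PI
  | S (S m) => 2 * PI / INR m * sphere_area m
  end.

(* Smooth profile on [0,1]: a function R -> R having derivatives of all orders
   everywhere (every smooth function on [0,1] extends to such a function). *)
Definition smooth (V : R -> R) : Prop := forall (k : nat) (x : R), ex_derive_n V k x.

(* G(.,s) is the Green function of  L u = -u'' - (n-1)/r u' + V u  on (0,1)
   with u'(0) = u'(1) = 0, i.e. (classical form of -L G(.,s) = δ_s in D'(0,1)):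
   G(.,s) is continuous on (0,1), twice differentiable and solves L G = 0
   on (0,1) \ {s}, ∂_r G(.,s) → 0 at r = 0+ and r = 1-, and the derivative
   has one-sided limits at s with jump  ∂_rG(s-,s) - ∂_rG(s+,s) = 1. *)
Definition is_green_function (n : nat) (V : R -> R) (G : R -> R -> R) : Prop :=
  forall s, 0 < s < 1 ->
    let g := fun r => G r s in
    (forall r, 0 < r < 1 -> continuous g r) /\
    (forall r, 0 < r < 1 -> r <> s ->
       ex_derive g r /\ ex_derive_n g 2 r /\
       - Derive_n g 2 r - (INR n - 1) / r * Derive g r + V r * g r = 0) /\
    filterlim (Derive g) (at_right 0) (locally 0) /\
    filterlim (Derive g) (at_left 1) (locally 0) /\
    (exists a b : R,
       filterlim (Derive g) (at_left s) (locally a) /\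
       filterlim (Derive g) (at_right s) (locally b) /\
       a - b = 1).

Definition F_of (n : nat) (G : R -> R -> R) (r : R) : R :=
  sphere_area n * r ^ (n - 1) / G r r.

Definition local_min_on_01 (f : R -> R) (x : R) : Prop :=
  0 < x < 1 /\
  exists delta : R, 0 < delta /\
    forall r, 0 < r < 1 -> Rabs (r - x) < delta -> f x <= f r.

(* Main.v *)
Require Import Defs.
From Stdlib Require Import Reals.
From Coquelicot Require Import Coquelicot.
Open Scope R_scope.
From Stdlib Require Import Reals Lra Lia.
From Coquelicot Require Import Coquelicot.
Open Scope R_scope.

Section Lims.
Context {T : Type} {F : (T -> Prop) -> Prop} {FF : Filter F}.

Lemma lim_mult (f g : T -> R) a b :
  filterlim f F (locally a) -> filterlim g F (locally b) ->
  filterlim (fun x => f x * g x) F (locally (a*b)).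
Proof.
  intros Hf Hg.
  apply (filterlim_comp_2 f g Rmult Hf Hg).
  exact (@filterlim_mult R_AbsRing a b).
Qed.

Lemma lim_plus (f g : T -> R) a b :
  filterlim f F (locally a) -> filterlim g F (locally b) ->
  filterlim (fun x => f x + g x) F (locally (a+b)).
Proof.
  intros Hf Hg.
  apply (filterlim_comp_2 f g Rplus Hf Hg).
  exact (@filterlim_plus R_AbsRing R_NormedModule a b).
Qed.

Lemma lim_opp (f : T -> R) a :
  filterlim f F (locally a) -> filterlim (fun x => - f x) F (locally (-a)).
Proof.
  intros Hf.
  apply (filterlim_comp _ _ _ f Ropp _ _ _ Hf).
  exact (@filterlim_opp R_AbsRing R_NormedModule a).
Qed.

Lemma lim_minus (f g : T -> R) a b :
  filterlim f F (locally a) -> filterlim g F (locally b) ->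
  filterlim (fun x => f x - g x) F (locally (a-b)).
Proof.
  intros Hf Hg. apply lim_plus; auto. apply lim_opp; auto.
Qed.

Lemma lim_pow (f : T -> R) a m :
  filterlim f F (locally a) -> filterlim (fun x => f x ^ m) F (locally (a^m)).
Proof.
  intros Hf; induction m; simpl.
  - apply filterlim_const.
  - apply lim_mult; auto.
Qed.

Lemma lim_eq (f : T -> R) (a b : R) : a = b -> filterlim f F (locally a) -> filterlim f F (locally b).
Proof. intros ->; auto. Qed.

Lemma lim_bounded_zero (f g : T -> R) M :
  filterlim f F (locally 0) -> F (fun x => Rabs (g x) <= M) ->
  filterlim (fun x => f x * g x) F (locally 0).
Proof.
  intros Hf Hg.
  apply filterlim_locally. intros eps.
  assert (HM : 0 < Rabs M + 1) by (pose proof (Rabs_pos M); lra).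
  set (e := mkposreal (eps / (Rabs M + 1)) (Rdiv_lt_0_compat _ _ (cond_pos eps) HM)).
  pose proof (proj1 (filterlim_locally f 0) Hf e) as He.
  eapply filter_imp; [| apply (filter_and _ _ He Hg)].
  intros x [H1 H2]. change (Rabs (f x * g x - 0) < eps).
  change (Rabs (f x - 0) < eps / (Rabs M + 1)) in H1.
  rewrite Rminus_0_r in *. rewrite Rabs_mult.
  assert (Rabs (g x) <= Rabs M + 1) by (pose proof (Rle_abs M); lra).
  apply Rle_lt_trans with (Rabs (f x) * (Rabs M + 1)).
  apply Rmult_le_compat_l; auto using Rabs_pos.
  apply (Rmult_lt_compat_r (Rabs M + 1)) in H1; auto.
  field_simplify in H1; lra.
Qed.

End Lims.
Lemma cont_of_derive (f : R -> R) x l : is_derive f x l -> continuity_pt f x.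
Proof.
  intros H. apply continuity_pt_filterlim. apply (@ex_derive_continuous R_AbsRing R_NormedModule). exists l; auto.
Qed.

Lemma mvt_int (f df : R -> R) a b x y :
  (forall r, a < r < b -> is_derive f r (df r)) -> a < x < b -> a < y < b ->
  exists c, a < c < b /\ f y - f x = df c * (y - x).
Proof.
  intros H Hx Hy.
  destruct (MVT_gen f x y df) as [c [Hc Hc2]].
  - intros r Hr. apply H. destruct (Rle_dec x y).
    + rewrite Rmin_left, Rmax_right in Hr; lra.
    + rewrite Rmin_right, Rmax_left in Hr; lra.
  - intros r Hr. apply (cont_of_derive f r (df r)). apply H. destruct (Rle_dec x y).
    + rewrite Rmin_left, Rmax_right in Hr; lra.
    + rewrite Rmin_right, Rmax_left in Hr; lra.
  - exists c. split; auto. destruct (Rle_dec x y).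
    + rewrite Rmin_left, Rmax_right in Hc; lra.
    + rewrite Rmin_right, Rmax_left in Hc; lra.
Qed.

Lemma const_int (W : R -> R) a b :
  (forall r, a < r < b -> is_derive W r 0) -> forall x y, a < x < b -> a < y < b -> W x = W y.
Proof.
  intros H x y Hx Hy.
  destruct (mvt_int W (fun _ => 0) a b x y H Hx Hy) as [c [_ Hc]]. lra.
Qed.

Lemma mono_int (W dW : R -> R) a b :
  (forall r, a < r < b -> is_derive W r (dW r) /\ 0 <= dW r) ->
  forall x y, a < x < b -> a < y < b -> x <= y -> W x <= W y.
Proof.
  intros H x y Hx Hy Hxy.
  destruct (mvt_int W dW a b x y (fun r Hr => proj1 (H r Hr)) Hx Hy) as [c [Hc1 Hc]].
  pose proof (proj2 (H c Hc1)). nra.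
Qed.

Lemma lip_int (f df : R -> R) a b :
  (forall r, a < r < b -> is_derive f r (df r) /\ Rabs (df r) <= 1) ->
  forall x y, a < x < b -> a < y < b -> Rabs (f y - f x) <= Rabs (y - x).
Proof.
  intros H x y Hx Hy.
  destruct (mvt_int f df a b x y (fun r Hr => proj1 (H r Hr)) Hx Hy) as [c [Hc1 Hc]].
  rewrite Hc, Rabs_mult. pose proof (proj2 (H c Hc1)).
  pose proof (Rabs_pos (y - x)). nra.
Qed.
Lemma dmul (f g : R -> R) x df dg : is_derive f x df -> is_derive g x dg ->
  is_derive (fun t => f t * g t) x (df * g x + f x * dg).
Proof. intros H1 H2. exact (@is_derive_mult R_AbsRing f g x df dg H1 H2 Rmult_comm). Qed.

Lemma dminus (f g : R -> R) x df dg : is_derive f x df -> is_derive g x dg ->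
  is_derive (fun t => f t - g t) x (df - dg).
Proof. intros H1 H2. exact (@is_derive_minus R_AbsRing R_NormedModule f g x df dg H1 H2). Qed.

Lemma dval (f : R -> R) x l l' : l = l' -> is_derive f x l -> is_derive f x l'.
Proof. intros ->; auto. Qed.

Definition odeat (n : nat) (V f : R -> R) (r : R) : Prop :=
  ex_derive f r /\ ex_derive (Derive f) r /\
  - Derive (Derive f) r - (INR n - 1) / r * Derive f r + V r * f r = 0.

Definition Wr (m : nat) (f h : R -> R) (r : R) : R :=
  r ^ m * (f r * Derive h r - Derive f r * h r).

Definition En (m : nat) (f : R -> R) (r : R) : R :=
  r ^ m * (f r * Derive f r).

Lemma dpow k r : is_derive (fun x => x ^ S k) r (INR (S k) * r ^ k).
Proof.
  pose proof (is_derive_pow (fun x => x) (S k) r 1 (is_derive_id r)) as Dp.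
  simpl pred in Dp. rewrite Rmult_1_r in Dp. exact Dp.
Qed.

Lemma wr_deriv k V f h r : 0 < r -> odeat (S (S k)) V f r -> odeat (S (S k)) V h r ->
  is_derive (Wr (S k) f h) r 0.
Proof.
  intros Hr [Hf1 [Hf2 Hf3]] [Hh1 [Hh2 Hh3]].
  pose proof (Derive_correct _ _ Hf1) as Df.
  pose proof (Derive_correct _ _ Hf2) as DDf.
  pose proof (Derive_correct _ _ Hh1) as Dh.
  pose proof (Derive_correct _ _ Hh2) as DDh.
  unfold Wr.
  eapply dval; [| apply dmul; [apply dpow | apply dminus; apply dmul; eauto]].
  rewrite !S_INR in *.
  replace (Derive (Derive f) r) with (- ((INR k + 1 + 1 - 1) / r * Derive f r) + V r * f r) by lra.
  replace (Derive (Derive h) r) with (- ((INR k + 1 + 1 - 1) / r * Derive h r) + V r * h r) by lra.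
  simpl. field. lra.
Qed.

Lemma en_deriv k V f r : 0 < r -> odeat (S (S k)) V f r ->
  is_derive (En (S k) f) r (r ^ S k * (Derive f r ^ 2 + V r * f r ^ 2)).
Proof.
  intros Hr [Hf1 [Hf2 Hf3]].
  pose proof (Derive_correct _ _ Hf1) as Df.
  pose proof (Derive_correct _ _ Hf2) as DDf.
  unfold En.
  eapply dval; [| apply dmul; [apply dpow | apply dmul; eauto]].
  rewrite !S_INR in *.
  replace (Derive (Derive f) r) with (- ((INR k + 1 + 1 - 1) / r * Derive f r) + V r * f r) by lra.
  simpl. field. lra.
Qed.
Lemma ball_R (x y : R) (e : R) : ball x e y <-> Rabs (y - x) < e.
Proof. reflexivity. Qed.

Lemma ball_iv (a e y : R) : ball a e y <-> a - e < y < a + e.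
Proof. rewrite ball_R. split; intros H; [apply Rabs_def2 in H | apply Rabs_def1]; lra. Qed.

Lemma at_right_int a b : a < b -> at_right a (fun r => a < r < b).
Proof.
  intros H. assert (Hp : 0 < b - a) by lra. exists (mkposreal (b - a) Hp). intros y Hy Hy2.
  apply ball_R in Hy. simpl in Hy. apply Rabs_def2 in Hy. unfold minus, plus, opp in Hy; simpl in Hy. lra.
Qed.

Lemma at_left_int a b : a < b -> at_left b (fun r => a < r < b).
Proof.
  intros H. assert (Hp : 0 < b - a) by lra. exists (mkposreal (b - a) Hp). intros y Hy Hy2.
  apply ball_R in Hy. simpl in Hy. apply Rabs_def2 in Hy. unfold minus, plus, opp in Hy; simpl in Hy. lra.
Qed.

Lemma const_lim {F : (R -> Prop) -> Prop} {FF : ProperFilter F} (W : R -> R) c L :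
  F (fun r => W r = c) -> filterlim W F (locally L) -> c = L.
Proof.
  intros H1 H2.
  pose proof (@filter_filter R F FF) as FF1.
  assert (H3 : filterlim (fun _ : R => c) F (locally L)).
  { exact (@filterlim_ext_loc R R F (locally L) FF1 W (fun _ => c) H1 H2). }
  exact (@filterlim_locally_unique R R_AbsRing R_NormedModule F (Proper_StrongProper F FF)
     (fun _ => c) c L (@filterlim_const R R_UniformSpace F FF1 c) H3).
Qed.

Lemma id_right a : filterlim (fun r => r) (at_right a) (locally a).
Proof. eapply filterlim_filter_le_1; [apply filter_le_within | apply filterlim_id]. Qed.
Lemma id_left a : filterlim (fun r => r) (at_left a) (locally a).
Proof. eapply filterlim_filter_le_1; [apply filter_le_within | apply filterlim_id]. Qed.

Lemma cont_right (f : R -> R) a : continuous f a -> filterlim f (at_right a) (locally (f a)).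
Proof. intros H. eapply filterlim_filter_le_1; [apply filter_le_within | exact H]. Qed.
Lemma cont_left (f : R -> R) a : continuous f a -> filterlim f (at_left a) (locally (f a)).
Proof. intros H. eapply filterlim_filter_le_1; [apply filter_le_within | exact H]. Qed.

Lemma lim_prod0 {F : (R -> Prop) -> Prop} {FF : Filter F} m (f h : R -> R) p M :
  filterlim (fun r => r) F (locally p) -> filterlim (Derive h) F (locally 0) ->
  F (fun r => Rabs (f r) <= M) ->
  filterlim (fun r => r ^ m * (f r * Derive h r)) F (locally 0).
Proof.
  intros Hid Hh Hf.
  apply (lim_eq _ (p ^ m * 0) 0 ltac:(ring)).
  apply lim_mult; [apply lim_pow; auto|].
  eapply filterlim_ext; [| apply (lim_bounded_zero (Derive h) f M Hh Hf)].
  intros; simpl; ring.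
Qed.

Lemma lim_wr0 {F : (R -> Prop) -> Prop} {FF : Filter F} m (f h : R -> R) p M :
  filterlim (fun r => r) F (locally p) -> filterlim (Derive h) F (locally 0) ->
  filterlim (Derive f) F (locally 0) ->
  F (fun r => Rabs (f r) <= M) -> F (fun r => Rabs (h r) <= M) ->
  filterlim (Wr m f h) F (locally 0).
Proof.
  intros Hid Hh Hf Bf Bh.
  apply (lim_eq _ (0 - 0) 0 ltac:(ring)).
  eapply filterlim_ext; [| apply lim_minus; [apply (lim_prod0 m f h p M); eauto | apply (lim_prod0 m h f p M); eauto]].
  intros r; unfold Wr; simpl; ring.
Qed.

Lemma lim_wr {F : (R -> Prop) -> Prop} {FF : Filter F} m (f h : R -> R) p f0 f1 h0 h1 :
  filterlim (fun r => r) F (locally p) ->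
  filterlim f F (locally f0) -> filterlim (Derive f) F (locally f1) ->
  filterlim h F (locally h0) -> filterlim (Derive h) F (locally h1) ->
  filterlim (Wr m f h) F (locally (p ^ m * (f0 * h1 - f1 * h0))).
Proof.
  intros Hid A B C D. unfold Wr.
  apply lim_mult; [apply lim_pow; auto|].
  apply lim_minus; apply lim_mult; auto.
Qed.

Lemma lim_le {F : (R -> Prop) -> Prop} {FF : ProperFilter F} (f : R -> R) c L :
  F (fun r => f r <= c) -> filterlim f F (locally L) -> L <= c.
Proof.
  intros H1 H2. pose proof (@filter_filter R F FF) as FF1.
  destruct (Rle_dec L c) as [|Hn]; auto. exfalso.
  assert (Hp : 0 < L - c) by lra.
  pose proof (proj1 (filterlim_locally f L) H2 (mkposreal _ Hp)) as H3.
  destruct (filter_ex _ (filter_and _ _ H1 H3)) as [x [A B]].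
  apply ball_iv in B. simpl in B. lra.
Qed.

Lemma lim_ge {F : (R -> Prop) -> Prop} {FF : ProperFilter F} (f : R -> R) c L :
  F (fun r => c <= f r) -> filterlim f F (locally L) -> c <= L.
Proof.
  intros H1 H2. pose proof (@filter_filter R F FF) as FF1.
  destruct (Rle_dec c L) as [|Hn]; auto. exfalso.
  assert (Hp : 0 < c - L) by lra.
  pose proof (proj1 (filterlim_locally f L) H2 (mkposreal _ Hp)) as H3.
  destruct (filter_ex _ (filter_and _ _ H1 H3)) as [x [A B]].
  apply ball_iv in B. simpl in B. lra.
Qed.

Lemma loc_int a b y : a < y < b -> locally y (fun t => a < t < b).
Proof.
  intros H. assert (Hp : 0 < Rmin (y - a) (b - y)) by (apply Rmin_glb_lt; lra).
  exists (mkposreal _ Hp). intros z Hz. apply ball_iv in Hz. simpl in Hz.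
  pose proof (Rmin_l (y - a) (b - y)). pose proof (Rmin_r (y - a) (b - y)). lra.
Qed.

Lemma deriv_zero_loc (E : R -> R) a b y l : a < y < b -> (forall t, a < t < b -> E t = 0) ->
  is_derive E y l -> l = 0.
Proof.
  intros Hy HE HD.
  assert (HD0 : is_derive E y 0).
  { apply (is_derive_ext_loc (fun _ => 0) E y 0).
    - eapply filter_imp; [| apply (loc_int a b y Hy)]. intros t Ht. rewrite HE; auto.
    - apply (@is_derive_const R_AbsRing R_NormedModule 0 y). }
  rewrite <- (is_derive_unique _ _ _ HD). apply is_derive_unique; auto.
Qed.
Section Green.
Variables (k : nat) (V : R -> R) (G : R -> R -> R).
Hypothesis HG : is_green_function (S (S k)) V G.

Lemma g_cont s r : 0 < s < 1 -> 0 < r < 1 -> continuous (fun x => G x s) r.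
Proof. intros Hs Hr. destruct (HG s Hs) as [H _]. exact (H r Hr). Qed.

Lemma g_ode s r : 0 < s < 1 -> 0 < r < 1 -> r <> s -> odeat (S (S k)) V (fun x => G x s) r.
Proof.
  intros Hs Hr Hrs. destruct (HG s Hs) as [_ [H _]].
  destruct (H r Hr Hrs) as [A [B C]]. split; [exact A | split; [exact B | exact C]].
Qed.

Lemma g_lim0 s : 0 < s < 1 -> filterlim (Derive (fun x => G x s)) (at_right 0) (locally 0).
Proof. intros Hs. destruct (HG s Hs) as [_ [_ [H _]]]. exact H. Qed.

Lemma g_lim1 s : 0 < s < 1 -> filterlim (Derive (fun x => G x s)) (at_left 1) (locally 0).
Proof. intros Hs. destruct (HG s Hs) as [_ [_ [_ [H _]]]]. exact H. Qed.

Lemma g_jump s : 0 < s < 1 -> exists a b : R,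
       filterlim (Derive (fun x => G x s)) (at_left s) (locally a) /\
       filterlim (Derive (fun x => G x s)) (at_right s) (locally b) /\
       a - b = 1.
Proof. intros Hs. destruct (HG s Hs) as [_ [_ [_ [_ H]]]]. exact H. Qed.

Lemma g_der s r : 0 < s < 1 -> 0 < r < 1 -> r <> s ->
  is_derive (fun x => G x s) r (Derive (fun x => G x s) r).
Proof. intros Hs Hr Hrs. apply Derive_correct. apply (g_ode s r Hs Hr Hrs). Qed.

Lemma abs_lt1 (a b : R) : 0 < a < 1 -> 0 < b < 1 -> Rabs (a - b) <= 1.
Proof. intros. apply Rabs_le. lra. Qed.

Lemma bnd0 s : 0 < s < 1 -> exists M, at_right 0 (fun r => Rabs (G r s) <= M).
Proof.
  intros Hs. pose proof (proj1 (filterlim_locally _ _) (g_lim0 s Hs) (mkposreal 1 Rlt_0_1)) as L.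
  destruct L as [d Hd]. simpl in Hd.
  set (b := Rmin d s).
  assert (Hb : 0 < b) by (unfold b; apply Rmin_glb_lt; [apply cond_pos | lra]).
  assert (Hbd : b <= d) by apply Rmin_l. assert (Hbs : b <= s) by apply Rmin_r.
  exists (Rabs (G (b/2) s) + 1).
  exists (mkposreal b Hb). intros y Hy Hy0. apply ball_iv in Hy. simpl in Hy.
  assert (HL := lip_int (fun x => G x s) (Derive (fun x => G x s)) 0 b).
  assert (K : Rabs (G y s - G (b/2) s) <= Rabs (y - b/2)).
  { apply HL; try lra. intros r Hr. split.
    - apply g_der; lra.
    - assert (HB : ball 0 d r).
      { apply ball_iv. lra. }
      pose proof (Hd r HB (proj1 Hr)) as Q. apply ball_iv in Q. simpl in Q. apply Rabs_le. lra. }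
  assert (Rabs (y - b/2) <= 1) by (apply abs_lt1; lra).
  pose proof (Rabs_triang_inv (G y s) (G (b/2) s)). lra.
Qed.

Lemma bnd1 s : 0 < s < 1 -> exists M, at_left 1 (fun r => Rabs (G r s) <= M).
Proof.
  intros Hs. pose proof (proj1 (filterlim_locally _ _) (g_lim1 s Hs) (mkposreal 1 Rlt_0_1)) as L.
  destruct L as [d Hd]. simpl in Hd.
  set (b := Rmax (1 - d) s).
  assert (Hb : b < 1) by (unfold b; apply Rmax_lub_lt; [pose proof (cond_pos d) | ]; lra).
  assert (Hbd : 1 - d <= b) by apply Rmax_l. assert (Hbs : s <= b) by apply Rmax_r.
  assert (Hp : 0 < 1 - b) by lra.
  exists (Rabs (G ((b+1)/2) s) + 1).
  exists (mkposreal (1 - b) Hp). intros y Hy Hy0. apply ball_iv in Hy. simpl in Hy.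
  assert (HL := lip_int (fun x => G x s) (Derive (fun x => G x s)) b 1).
  assert (K : Rabs (G y s - G ((b+1)/2) s) <= Rabs (y - (b+1)/2)).
  { apply HL; try lra. intros r Hr. split.
    - apply g_der; lra.
    - assert (HB : ball 1 d r).
      { apply ball_iv. lra. }
      pose proof (Hd r HB (proj2 Hr)) as Q. apply ball_iv in Q. simpl in Q. apply Rabs_le. lra. }
  assert (Rabs (y - (b+1)/2) <= 1) by (apply abs_lt1; lra).
  pose proof (Rabs_triang_inv (G y s) (G ((b+1)/2) s)). lra.
Qed.

Lemma wr_lim0 s1 s2 : 0 < s1 < 1 -> 0 < s2 < 1 ->
  filterlim (Wr (S k) (fun x => G x s1) (fun x => G x s2)) (at_right 0) (locally 0).
Proof.
  intros H1 H2. destruct (bnd0 s1 H1) as [M1 B1]. destruct (bnd0 s2 H2) as [M2 B2].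
  apply (lim_wr0 (S k) _ _ 0 (Rmax M1 M2)); [apply id_right | apply g_lim0 | apply g_lim0 | |]; auto.
  - eapply filter_imp; [| exact B1]. intros r Hr. pose proof (Rmax_l M1 M2); lra.
  - eapply filter_imp; [| exact B2]. intros r Hr. pose proof (Rmax_r M1 M2); lra.
Qed.

Lemma wr_lim1 s1 s2 : 0 < s1 < 1 -> 0 < s2 < 1 ->
  filterlim (Wr (S k) (fun x => G x s1) (fun x => G x s2)) (at_left 1) (locally 0).
Proof.
  intros H1 H2. destruct (bnd1 s1 H1) as [M1 B1]. destruct (bnd1 s2 H2) as [M2 B2].
  apply (lim_wr0 (S k) _ _ 1 (Rmax M1 M2)); [apply id_left | apply g_lim1 | apply g_lim1 | |]; auto.
  - eapply filter_imp; [| exact B1]. intros r Hr. pose proof (Rmax_l M1 M2); lra.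
  - eapply filter_imp; [| exact B2]. intros r Hr. pose proof (Rmax_r M1 M2); lra.
Qed.

Lemma wr_const s1 s2 a b : 0 < s1 < 1 -> 0 < s2 < 1 -> 0 <= a -> b <= 1 ->
  ~ (a < s1 < b) -> ~ (a < s2 < b) ->
  forall x y, a < x < b -> a < y < b ->
  Wr (S k) (fun x => G x s1) (fun x => G x s2) x = Wr (S k) (fun x => G x s1) (fun x => G x s2) y.
Proof.
  intros H1 H2 Ha Hb N1 N2. apply const_int. intros r Hr.
  apply (wr_deriv k V); [lra | apply g_ode | apply g_ode]; try lra; intro; subst; tauto.
Qed.

Lemma wr_zero0 s1 s2 x r : 0 < s1 < 1 -> 0 < s2 < 1 -> 0 < x -> x <= s1 -> x <= s2 -> 0 < r < x ->
  Wr (S k) (fun x => G x s1) (fun x => G x s2) r = 0.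
Proof.
  intros H1 H2 Hx X1 X2 Hr.
  eapply (@const_lim (at_right 0) (at_right_proper_filter 0) _ _ 0); [| apply wr_lim0; auto].
  eapply filter_imp; [| apply (at_right_int 0 x Hx)].
  intros y Hy. apply (wr_const s1 s2 0 x); auto; lra.
  all: assumption.
Qed.

Lemma wr_zero1 s1 s2 x r : 0 < s1 < 1 -> 0 < s2 < 1 -> x < 1 -> s1 <= x -> s2 <= x -> x < r < 1 ->
  Wr (S k) (fun x => G x s1) (fun x => G x s2) r = 0.
Proof.
  intros H1 H2 Hx X1 X2 Hr.
  eapply (@const_lim (at_left 1) (at_left_proper_filter 1) _ _ 0); [| apply wr_lim1; auto].
  eapply filter_imp; [| apply (at_left_int x 1 Hx)].
  intros y Hy. apply (wr_const s1 s2 x 1); auto; lra.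
  all: assumption.
Qed.


Hypothesis HV : forall x, 0 <= x <= 1 -> 0 <= V x.

Lemma en_der_pos s r : 0 < s < 1 -> 0 < r < 1 -> r <> s ->
  is_derive (En (S k) (fun x => G x s)) r (r ^ S k * (Derive (fun x => G x s) r ^ 2 + V r * G r s ^ 2)) /\
  0 <= r ^ S k * (Derive (fun x => G x s) r ^ 2 + V r * G r s ^ 2).
Proof.
  intros Hs Hr Hrs. split.
  - apply (en_deriv k V (fun x => G x s)); [lra | apply g_ode; auto].
  - apply Rmult_le_pos. apply pow_le; lra.
    assert (0 <= V r) by (apply HV; lra).
    pose proof (pow2_ge_0 (Derive (fun x => G x s) r)). pose proof (pow2_ge_0 (G r s)). nra.
Qed.

Lemma diag_pos s : 0 < s < 1 -> 0 < G s s.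
Proof.
  intros Hs.
  set (g := fun x => G x s).
  set (E := En (S k) g).
  destruct (g_jump s Hs) as [a [b [La [Lb Hab]]]].
  fold g in La, Lb.
  set (dE := fun r => r ^ S k * (Derive g r ^ 2 + V r * G r s ^ 2)).
  assert (M1 : forall x y, 0 < x < s -> 0 < y < s -> x <= y -> E x <= E y).
  { apply (mono_int E dE). intros r Hr. apply en_der_pos; lra. }
  assert (M2 : forall x y, s < x < 1 -> s < y < 1 -> x <= y -> E x <= E y).
  { apply (mono_int E dE). intros r Hr. apply en_der_pos; lra. }
  destruct (bnd0 s Hs) as [B0 HB0]. destruct (bnd1 s Hs) as [B1 HB1].
  assert (L0 : filterlim E (at_right 0) (locally 0)).
  { apply (lim_prod0 (S k) g g 0 B0); [apply id_right | apply g_lim0; auto | exact HB0]. }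
  assert (L1 : filterlim E (at_left 1) (locally 0)).
  { apply (lim_prod0 (S k) g g 1 B1); [apply id_left | apply g_lim1; auto | exact HB1]. }
  assert (Ls : filterlim E (at_left s) (locally (s ^ S k * (g s * a)))).
  { apply lim_mult; [apply lim_pow, id_left | apply lim_mult; [apply cont_left, g_cont; auto | exact La]]. }
  assert (Rs : filterlim E (at_right s) (locally (s ^ S k * (g s * b)))).
  { apply lim_mult; [apply lim_pow, id_right | apply lim_mult; [apply cont_right, g_cont; auto | exact Lb]]. }
  assert (P0 : forall y, 0 < y < s -> 0 <= E y).
  { intros y Hy. apply (lim_le (F := at_right 0) E (E y) 0); [| exact L0].
    eapply filter_imp; [| apply (at_right_int 0 y (proj1 Hy))]. intros r Hr. apply M1; lra. }
  assert (P1 : forall y, s < y < 1 -> E y <= 0).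
  { intros y Hy. apply (lim_ge (F := at_left 1) E (E y) 0); [| exact L1].
    eapply filter_imp; [| apply (at_left_int y 1 (proj2 Hy))]. intros r Hr. apply M2; lra. }
  assert (A1 : 0 <= s ^ S k * (g s * a)).
  { apply (lim_ge (F := at_left s) E 0); [| exact Ls].
    eapply filter_imp; [| apply (at_left_int 0 s (proj1 Hs))]. intros r Hr. apply P0; lra. }
  assert (A2 : s ^ S k * (g s * b) <= 0).
  { apply (lim_le (F := at_right s) E 0); [| exact Rs].
    eapply filter_imp; [| apply (at_right_int s 1 (proj2 Hs))]. intros r Hr. apply P1; lra. }
  assert (Hsp : 0 < s ^ S k) by (apply pow_lt; lra).
  assert (Hg : 0 <= g s).
  { assert (0 <= s ^ S k * g s) by nra. nra. }
  destruct (Rle_lt_or_eq_dec 0 (g s) Hg) as [Hlt | Heq]; [exact Hlt|].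
  exfalso.
  assert (Z0 : forall y, 0 < y < s -> E y = 0).
  { intros y Hy. apply Rle_antisym; [| apply P0; auto].
    assert (E y <= s ^ S k * (g s * a)).
    { apply (lim_ge (F := at_left s) E (E y)); [| exact Ls].
      eapply filter_imp; [| apply (at_left_int y s (proj2 Hy))]. intros r Hr. apply M1; lra. }
    rewrite <- Heq in H. lra. }
  assert (Z1 : forall y, s < y < 1 -> E y = 0).
  { intros y Hy. apply Rle_antisym; [apply P1; auto |].
    assert (s ^ S k * (g s * b) <= E y).
    { apply (lim_le (F := at_right s) E (E y)); [| exact Rs].
      eapply filter_imp; [| apply (at_right_int s y (proj1 Hy))]. intros r Hr. apply M2; lra. }
    rewrite <- Heq in H. lra. }
  assert (D0 : forall y a0 b0, a0 < y < b0 -> 0 <= a0 -> b0 <= 1 -> ~ (a0 < s < b0) ->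
             (forall t, a0 < t < b0 -> E t = 0) -> Derive g y = 0).
  { intros y a0 b0 Hy Ha0 Hb0 Hns HZ.
    assert (Hys : y <> s) by (intro; subst; tauto).
    destruct (en_der_pos s y Hs ltac:(lra) Hys) as [HD _].
    pose proof (deriv_zero_loc E a0 b0 y _ Hy HZ HD) as Q.
    assert (Hyp : 0 < y ^ S k) by (apply pow_lt; lra).
    assert (0 <= V y) by (apply HV; lra).
    pose proof (pow2_ge_0 (Derive g y)). pose proof (pow2_ge_0 (G y s)).
    assert (Derive g y ^ 2 = 0).
    { apply Rmult_integral in Q. destruct Q as [Q|Q]; [exfalso; apply (Rlt_not_eq _ _ Hyp); symmetry; exact Q|].
      assert (Q2 : Derive g y ^ 2 + V y * G y s ^ 2 = 0) by exact Q. nra. }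
    nra. }
  assert (Ha : a = 0).
  { symmetry. apply (@const_lim (at_left s) (at_left_proper_filter s) (Derive g) 0 a); [| exact La].
    eapply filter_imp; [| apply (at_left_int 0 s (proj1 Hs))]. intros r Hr.
    apply (D0 r 0 s); auto; lra. }
  assert (Hb : b = 0).
  { symmetry. apply (@const_lim (at_right s) (at_right_proper_filter s) (Derive g) 0 b); [| exact Lb].
    eapply filter_imp; [| apply (at_right_int s 1 (proj2 Hs))]. intros r Hr.
    apply (D0 r s 1); auto; lra. }
  lra.
Qed.


Lemma der_cont s x : 0 < s < 1 -> 0 < x < 1 -> x <> s -> continuous (Derive (fun r => G r s)) x.
Proof.
  intros Hs Hx Hxs. apply (@ex_derive_continuous R_AbsRing R_NormedModule).
  apply (g_ode s x Hs Hx Hxs).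
Qed.


Lemma gl s x : 0 < s < 1 -> 0 < x < 1 -> filterlim (fun r => G r s) (at_left x) (locally (G x s)).
Proof. intros. apply (cont_left (fun r => G r s)). apply g_cont; auto. Qed.
Lemma gr s x : 0 < s < 1 -> 0 < x < 1 -> filterlim (fun r => G r s) (at_right x) (locally (G x s)).
Proof. intros. apply (cont_right (fun r => G r s)). apply g_cont; auto. Qed.
Lemma dl s x : 0 < s < 1 -> 0 < x < 1 -> x <> s ->
  filterlim (Derive (fun r => G r s)) (at_left x) (locally (Derive (fun r => G r s) x)).
Proof. intros. apply (cont_left (Derive (fun r => G r s))). apply der_cont; auto. Qed.
Lemma dr s x : 0 < s < 1 -> 0 < x < 1 -> x <> s ->
  filterlim (Derive (fun r => G r s)) (at_right x) (locally (Derive (fun r => G r s) x)).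
Proof. intros. apply (cont_right (Derive (fun r => G r s))). apply der_cont; auto. Qed.

Lemma left_rel s t a : 0 < s -> s < t -> t < 1 ->
  filterlim (Derive (fun r => G r s)) (at_left s) (locally a) ->
  G s s * Derive (fun r => G r t) s = a * G s t.
Proof.
  intros H0 Hst Ht La.
  assert (L : filterlim (Wr (S k) (fun r => G r s) (fun r => G r t)) (at_left s)
     (locally (s ^ S k * (G s s * Derive (fun r => G r t) s - a * G s t)))).
  { apply lim_wr; [apply id_left | apply gl | exact La | apply gl | apply dl]; lra. }
  assert (Z : 0 = s ^ S k * (G s s * Derive (fun r => G r t) s - a * G s t)).
  { eapply (@const_lim (at_left s) (at_left_proper_filter s) _ 0 _); [| exact L].
    eapply filter_imp; [| apply (at_left_int 0 s H0)]. intros r Hr.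
    apply (wr_zero0 s t s r); lra. }
  assert (Hp : 0 < s ^ S k) by (apply pow_lt; lra).
  symmetry in Z. apply Rmult_integral in Z. destruct Z as [Z|Z]; [exfalso; apply (Rlt_not_eq _ _ Hp); symmetry; exact Z|].
  assert (Z2 : G s s * Derive (fun r => G r t) s - a * G s t = 0) by exact Z. lra.
Qed.

Lemma right_rel s t b : 0 < t -> t < s -> s < 1 ->
  filterlim (Derive (fun r => G r s)) (at_right s) (locally b) ->
  G s s * Derive (fun r => G r t) s = b * G s t.
Proof.
  intros H0 Hst Ht Lb.
  assert (L : filterlim (Wr (S k) (fun r => G r s) (fun r => G r t)) (at_right s)
     (locally (s ^ S k * (G s s * Derive (fun r => G r t) s - b * G s t)))).
  { apply lim_wr; [apply id_right | apply gr | exact Lb | apply gr | apply dr]; lra. }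
  assert (Z : 0 = s ^ S k * (G s s * Derive (fun r => G r t) s - b * G s t)).
  { eapply (@const_lim (at_right s) (at_right_proper_filter s) _ 0 _); [| exact L].
    eapply filter_imp; [| apply (at_right_int s 1 Ht)]. intros r Hr.
    apply (wr_zero1 s t s r); lra. }
  assert (Hp : 0 < s ^ S k) by (apply pow_lt; lra).
  symmetry in Z. apply Rmult_integral in Z. destruct Z as [Z|Z]; [exfalso; apply (Rlt_not_eq _ _ Hp); symmetry; exact Z|].
  assert (Z2 : G s s * Derive (fun r => G r t) s - b * G s t = 0) by exact Z. lra.
Qed.

Lemma wr_mid x y r : 0 < x -> x < r -> r < y -> y < 1 ->
  Wr (S k) (fun z => G z x) (fun z => G z y) r = x ^ S k * G x y /\
  Wr (S k) (fun z => G z x) (fun z => G z y) r = y ^ S k * G y x.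
Proof.
  intros Hx Hxr Hry Hy.
  assert (Hx1 : 0 < x < 1) by lra. assert (Hy1 : 0 < y < 1) by lra.
  destruct (g_jump x Hx1) as [a1 [b1 [La1 [Lb1 Hab1]]]].
  destruct (g_jump y Hy1) as [a2 [b2 [La2 [Lb2 Hab2]]]].
  set (W := Wr (S k) (fun z => G z x) (fun z => G z y)).
  assert (Cst : forall t, x < t < y -> W t = W r).
  { intros t Ht. apply (wr_const x y x y); lra. }
  split.
  - assert (L1 : filterlim W (at_left x)
       (locally (x ^ S k * (G x x * Derive (fun z => G z y) x - a1 * G x y)))).
    { apply lim_wr; [apply id_left | apply gl | exact La1 | apply gl | apply dl]; lra. }
    assert (L2 : filterlim W (at_right x)
       (locally (x ^ S k * (G x x * Derive (fun z => G z y) x - b1 * G x y)))).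
    { apply lim_wr; [apply id_right | apply gr | exact Lb1 | apply gr | apply dr]; lra. }
    assert (Z1 : 0 = x ^ S k * (G x x * Derive (fun z => G z y) x - a1 * G x y)).
    { eapply (@const_lim (at_left x) (at_left_proper_filter x) _ 0 _); [| exact L1].
      eapply filter_imp; [| apply (at_left_int 0 x Hx)]. intros t Ht.
      apply (wr_zero0 x y x t); lra. }
    assert (Z2 : W r = x ^ S k * (G x x * Derive (fun z => G z y) x - b1 * G x y)).
    { eapply (@const_lim (at_right x) (at_right_proper_filter x) _ _ _); [| exact L2].
      eapply filter_imp; [| apply (at_right_int x y ltac:(lra))]. intros t Ht. apply Cst; lra. }
    change (W r = x ^ S k * G x y).
    replace b1 with (a1 - 1) in Z2 by lra.
    rewrite Z2. replace (x ^ S k * (G x x * Derive (fun z => G z y) x - (a1 - 1) * G x y))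
      with (x ^ S k * (G x x * Derive (fun z => G z y) x - a1 * G x y) + x ^ S k * G x y) by ring.
    rewrite <- Z1. ring.
  - assert (L1 : filterlim W (at_left y)
       (locally (y ^ S k * (G y x * a2 - Derive (fun z => G z x) y * G y y)))).
    { apply lim_wr; [apply id_left | apply gl | apply dl | apply gl | exact La2]; lra. }
    assert (L2 : filterlim W (at_right y)
       (locally (y ^ S k * (G y x * b2 - Derive (fun z => G z x) y * G y y)))).
    { apply lim_wr; [apply id_right | apply gr | apply dr | apply gr | exact Lb2]; lra. }
    assert (Z1 : 0 = y ^ S k * (G y x * b2 - Derive (fun z => G z x) y * G y y)).
    { eapply (@const_lim (at_right y) (at_right_proper_filter y) _ 0 _); [| exact L2].
      eapply filter_imp; [| apply (at_right_int y 1 Hy)]. intros t Ht.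
      apply (wr_zero1 x y y t); lra. }
    assert (Z2 : W r = y ^ S k * (G y x * a2 - Derive (fun z => G z x) y * G y y)).
    { eapply (@const_lim (at_left y) (at_left_proper_filter y) _ _ _); [| exact L1].
      eapply filter_imp; [| apply (at_left_int x y ltac:(lra))]. intros t Ht. apply Cst; lra. }
    change (W r = y ^ S k * G y x).
    replace a2 with (b2 + 1) in Z2 by lra.
    rewrite Z2. replace (y ^ S k * (G y x * (b2 + 1) - Derive (fun z => G z x) y * G y y))
      with (y ^ S k * (G y x * b2 - Derive (fun z => G z x) y * G y y) + y ^ S k * G y x) by ring.
    rewrite <- Z1. ring.
Qed.

End Green.

Lemma sa_pos m : 0 < sphere_area (S m) /\ 0 < sphere_area (S (S m)).
Proof.
  induction m as [|m IH].
  - simpl. split; [lra | pose proof PI_RGT_0; lra].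
  - split; [apply IH|]. destruct IH as [I1 I2].
    change (sphere_area (S (S (S m)))) with (2 * PI / INR (S m) * sphere_area (S m)).
    pose proof PI_RGT_0. assert (0 < INR (S m)) by apply lt_0_INR, Nat.lt_0_succ.
    apply Rmult_lt_0_compat; auto. apply Rdiv_lt_0_compat; lra.
Qed.

Theorem proposition4p3 (n : nat) (V : R -> R) (G : R -> R -> R) (rbar : R) :
  (2 <= n)%nat ->
  smooth V ->
  (forall x, 0 <= x <= 1 -> 0 <= V x) ->
  (exists x, 0 <= x <= 1 /\ V x <> 0) ->
  is_green_function n V G ->
  local_min_on_01 (F_of n G) rbar ->
  filterlim (Derive (fun r => G r rbar)) (at_left rbar) (locally (1 / 2)) /\
  filterlim (Derive (fun r => G r rbar)) (at_right rbar) (locally (- (1 / 2))).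
Proof.
  intros Hn _ HV _ HG Hmin.
  destruct n as [|[|k]]; [lia | lia |].
  destruct Hmin as [Hr [delta [Hdelta Hloc]]].
  assert (Hc : 0 < sphere_area (S (S k))) by apply (sa_pos (S k)).
  set (c := sphere_area (S (S k))) in *.
  assert (Hg0 : 0 < G rbar rbar) by (apply (diag_pos k V G HG HV); auto).
  assert (T1 : exists t1, 0 < t1 < rbar /\ 0 < G t1 rbar).
  { pose proof (gl k V G HG rbar rbar Hr Hr) as L.
    pose proof (proj1 (filterlim_locally _ _) L (mkposreal _ Hg0)) as L2.
    destruct (filter_ex _ (filter_and _ _ L2 (at_left_int 0 rbar (proj1 Hr)))) as [t [Ht1 Ht2]].
    apply ball_iv in Ht1. simpl in Ht1. exists t. split; [auto | lra]. }
  destruct T1 as [t1 [Ht1 Gt1]].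
  assert (Gt1' : 0 < G rbar t1).
  { destruct (wr_mid k V G HG t1 rbar ((t1 + rbar)/2)) as [E1 E2]; try lra.
    assert (0 < t1 ^ S k) by (apply pow_lt; lra).
    assert (0 < rbar ^ S k) by (apply pow_lt; lra).
    assert (rbar ^ S k * G rbar t1 = t1 ^ S k * G t1 rbar) by lra.
    assert (0 < t1 ^ S k * G t1 rbar) by (apply Rmult_lt_0_compat; auto).
    nra. }
  assert (T2 : exists t2, rbar < t2 < 1 /\ 0 < G t2 t1).
  { assert (Ht1' : 0 < t1 < 1) by lra.
    pose proof (gr k V G HG t1 rbar Ht1' Hr) as L.
    pose proof (proj1 (filterlim_locally _ _) L (mkposreal _ Gt1')) as L2.
    destruct (filter_ex _ (filter_and _ _ L2 (at_right_int rbar 1 (proj2 Hr)))) as [t [Hq1 Hq2]].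
    apply ball_iv in Hq1. simpl in Hq1. exists t. split; [auto | lra]. }
  destruct T2 as [t2 [Ht2 Gt2]].
  set (u := fun s => G s t2). set (v := fun s => G s t1).
  set (C := t2 ^ S k * G t2 t1).
  assert (HC : 0 < C) by (apply Rmult_lt_0_compat; auto; apply pow_lt; lra).
  assert (Key : forall s, t1 < s < t2 -> G s s * C = s ^ S k * (u s * v s)).
  { intros s Hs.
    destruct (g_jump k V G HG s ltac:(lra)) as [a [b [La [Lb Hab]]]].
    pose proof (left_rel k V G HG s t2 a ltac:(lra) ltac:(lra) ltac:(lra) La) as E1.
    pose proof (right_rel k V G HG s t1 b ltac:(lra) ltac:(lra) ltac:(lra) Lb) as E2.
    destruct (wr_mid k V G HG t1 t2 s) as [_ W2]; try lra.
    unfold Wr in W2. fold C in W2.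
    unfold u, v. rewrite <- W2.
    replace (G s s * (s ^ S k * (G s t1 * Derive (fun z => G z t2) s - Derive (fun z => G z t1) s * G s t2)))
      with (s ^ S k * (G s t1 * (G s s * Derive (fun z => G z t2) s) - (G s s * Derive (fun z => G z t1) s) * G s t2)) by ring.
    rewrite E1, E2. replace a with (b + 1) by lra. ring. }
  assert (Ppos : forall s, t1 < s < t2 -> 0 < u s * v s).
  { intros s Hs. pose proof (Key s Hs) as K.
    assert (0 < G s s) by (apply (diag_pos k V G HG HV); lra).
    assert (0 < s ^ S k) by (apply pow_lt; lra).
    assert (0 < G s s * C) by (apply Rmult_lt_0_compat; auto).
    rewrite K in H1. apply (Rmult_lt_reg_l (s ^ S k)); auto. lra. }
  set (Q := fun s => c * C * / (u s * v s)).
  assert (FQ : forall s, t1 < s < t2 -> F_of (S (S k)) G s = Q s).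
  { intros s Hs. unfold F_of, Q. replace (S (S k) - 1)%nat with (S k) by lia.
    pose proof (Key s Hs) as K. pose proof (Ppos s Hs).
    assert (0 < G s s) by (apply (diag_pos k V G HG HV); lra).
    assert (0 < s ^ S k) by (apply pow_lt; lra).
    assert (G s s = s ^ S k * (u s * v s) / C) by (rewrite <- K; unfold Rdiv; rewrite Rmult_assoc, Rinv_r by lra; ring).
    rewrite H2. cbv beta. fold c. set (p := s ^ S k) in *.
    assert (u s <> 0) by (intro Hu; rewrite Hu in H; lra).
    assert (v s <> 0) by (intro Hu; rewrite Hu in H; lra).
    field. repeat split; auto; lra. }
  assert (Du : is_derive u rbar (Derive u rbar)).
  { apply (g_der k V G HG t2 rbar); lra. }
  assert (Dv : is_derive v rbar (Derive v rbar)).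
  { apply (g_der k V G HG t1 rbar); lra. }
  assert (HP : 0 < u rbar * v rbar) by (apply Ppos; lra).
  set (P' := Derive u rbar * v rbar + u rbar * Derive v rbar).
  assert (DQ : is_derive Q rbar (c * C * (- P' / (u rbar * v rbar) ^ 2))).
  { unfold Q. apply is_derive_scal. apply (is_derive_inv (fun s => u s * v s)); [| lra].
    apply dmul; auto. }
  assert (DQ' := proj1 (is_derive_Reals _ _ _) DQ).
  assert (Z : c * C * (- P' / (u rbar * v rbar) ^ 2) = 0).
  { set (am := Rmax t1 (rbar - delta)). set (bm := Rmin t2 (rbar + delta)).
    assert (Ham : am < rbar) by (unfold am; apply Rmax_lub_lt; lra).
    assert (Hbm : rbar < bm) by (unfold bm; apply Rmin_glb_lt; lra).
    pose proof (deriv_minimum Q am bm rbar (exist _ _ DQ') Ham Hbm) as DM.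
    simpl in DM. apply DM. intros x Hx1 Hx2.
    assert (t1 <= am) by apply Rmax_l. assert (rbar - delta <= am) by apply Rmax_r.
    assert (bm <= t2) by apply Rmin_l. assert (bm <= rbar + delta) by apply Rmin_r.
    rewrite <- (FQ rbar), <- (FQ x) by lra.
    apply Hloc; [lra | apply Rabs_def1; lra]. }
  assert (HP'0 : P' = 0).
  { assert (0 < (u rbar * v rbar) ^ 2) by (apply pow_lt; lra).
    assert (0 < c * C) by (apply Rmult_lt_0_compat; auto).
    apply Rmult_integral in Z. destruct Z as [Z|Z]; [lra|].
    unfold Rdiv in Z. apply Rmult_integral in Z. destruct Z as [Z|Z]; [lra|].
    exfalso. apply Rinv_neq_0_compat in Z; auto. lra. }
  destruct (g_jump k V G HG rbar Hr) as [a [b [La [Lb Hab]]]].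
  pose proof (left_rel k V G HG rbar t2 a ltac:(lra) ltac:(lra) ltac:(lra) La) as E1.
  pose proof (right_rel k V G HG rbar t1 b ltac:(lra) ltac:(lra) ltac:(lra) Lb) as E2.
  assert (X1 : G rbar rbar * Derive u rbar = a * u rbar) by exact E1.
  assert (X2 : G rbar rbar * Derive v rbar = b * v rbar) by exact E2.
  assert (Hab0 : (a + b) * (u rbar * v rbar) = 0).
  { transitivity (G rbar rbar * P').
    - unfold P'.
      replace (G rbar rbar * (Derive u rbar * v rbar + u rbar * Derive v rbar))
        with ((G rbar rbar * Derive u rbar) * v rbar + u rbar * (G rbar rbar * Derive v rbar)) by ring.
      rewrite X1, X2. ring.
    - rewrite HP'0. ring. }
  assert (Hs : a + b = 0).
  { apply Rmult_integral in Hab0. destruct Hab0; [auto | lra]. }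
  assert (a = 1/2) by lra. assert (b = - (1/2)) by lra. subst a b.
  split; auto.
Qed.
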